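(* Let $\mu$ be a Borel measure on the Sorgenfrey line $\mathbb R_\ell$ such that there is an open subset $U$ of $\mathbb R_\ell$ with $0<\mu(U)<+\infty$ and $\mu(\{x\})=0$ for every $x\in U$. Then the continuous valuation $\overline\mu$ on $\mathcal Q\mathbb R_\ell$ (with its Scott topology) defined by $\overline\mu(\mathcal U)=\mu(\{x\in\mathbb R:\{x\}\in\mathcal U\})$ for Scott-open $\mathcal U\subseteq\mathcal Q\mathbb R_\ell$ is not point-continuous. In particular, taking $\mu=\lambda$ the Lebesgue measure, $\overline\lambda$ is not point-continuous.
   Context: The Sorgenfrey line $\mathbb R_\ell$ is the set of reals with the topology generated by the half-open intervals $[a,b[$, $a<b$; its Borel $\sigma$-algebra coincides with that of the usual real line. $\mathcal Q\mathbb R_\ell$ denotes the set of non-empty compact subsets of $\mathbb R_\ell$, ordered by reverse inclusion $\supseteq$; it is a dcpo (directed suprema are intersections), and it carries its Scott topology. For a Scott-open $\mathcal U$, the set $\{x\in\mathbb R:\{x\}\in\mathcal U\}$ is open in $\mathbb R_\ell$, so $\overline\mu$ is well-defined. A valuation on a space $X$ is a map $\nu:\mathcal OX\to[0,\infty]$ that is strict, monotone and modular; it is continuous if it preserves directed suprema of opens. A valuation $\nu$ is point-continuous if for every open $U$ and every real $r$ with $0\le r<\nu(U)$ there is a finite subset $A\subseteq U$ such that $\nu(V)>r$ for every open $V\supseteq A$. *)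

(* Defs.v *)
From HB Require Import structures.
From mathcomp Require Import all_boot all_order all_algebra.
From mathcomp Require Import all_classical all_reals all_analysis.
Set Implicit Arguments. Unset Strict Implicit. Unset Printing Implicit Defensive.
Import Order.TTheory GRing.Theory Num.Theory.
Local Open Scope classical_set_scope.
Local Open Scope ring_scope.

Section Sorgenfrey.
Variable R : realType.

(* Opens of the Sorgenfrey line: unions of half-open intervals [a,b[,
   i.e. every point x of U has some [x,b[ (x<b) inside U. *)
Definition sorg_open (U : set R) : Prop :=
  forall x, U x -> exists b : R, x < b /\ `[x, b[ `<=` U.

Definition sorg_compact (K : set R) : Prop :=
  forall C : set (set R), (forall V, C V -> sorg_open V) ->
    K `<=` \bigcup_(V in C) V ->
    exists D : set (set R), [/\ finite_set D, D `<=` C & K `<=` \bigcup_(V in D) V].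

Definition inQ (K : set R) : Prop := K !=set0 /\ sorg_compact K.

Definition Qle (K L : set R) : Prop := L `<=` K.

Definition Q_directed (D : set (set R)) : Prop :=
  D `<=` inQ /\ D !=set0 /\
  forall K L, D K -> D L -> exists M, [/\ D M, Qle K M & Qle L M].

Definition Q_lub (D : set (set R)) (s : set R) : Prop :=
  [/\ inQ s, (forall d, D d -> Qle d s) &
      (forall t, inQ t -> (forall d, D d -> Qle d t) -> Qle s t)].

Definition scott_open (UU : set (set R)) : Prop :=
  [/\ UU `<=` inQ,
      (forall K L, UU K -> inQ L -> Qle K L -> UU L) &
      (forall D s, Q_directed D -> Q_lub D s -> UU s -> exists2 d, D d & UU d)].

Definition mubar (mu : set R -> \bar R) (UU : set (set R)) : \bar R :=
  mu [set x | UU [set x]].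

Definition point_continuous (nu : set (set R) -> \bar R) : Prop :=
  forall UU : set (set R), scott_open UU ->
  forall r : R, 0 <= r -> (r%:E < nu UU)%E ->
    exists A : set (set R), [/\ finite_set A, A `<=` UU &
      forall VV, scott_open VV -> A `<=` VV -> (r%:E < nu VV)%E].

End Sorgenfrey.

(* Main.v *)
Require Import Defs.
From HB Require Import structures.
From mathcomp Require Import all_boot all_order all_algebra.
From mathcomp Require Import all_classical all_reals all_analysis.
From mathcomp Require Import lra.
Import Order.TTheory GRing.Theory Num.Theory.
Local Open Scope classical_set_scope.
Local Open Scope ring_scope.

Lemma fin_ind (T : choiceType) (P : set T -> Prop) :
  P set0 -> (forall A x, P A -> P (x |` A)) ->
  forall A, finite_set A -> P A.
Proof.
move=> P0 PU A fA; rewrite -(fset_setK fA).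
suff H : forall s : seq T, P [set x | x \in s] by exact: H.
elim=> [|a s IH].
  by rewrite (_ : [set x | x \in [::]] = set0) //; apply/seteqP; split.
rewrite (_ : [set x | x \in a :: s] = a |` [set x | x \in s]); first exact: PU.
apply/seteqP; split => x /=; rewrite in_cons.
  by case/orP => [/eqP ->|]; [left|right].
by case=> [->|->]; rewrite ?eqxx ?orbT.
Qed.

Section A.
Variable R : realType.
Implicit Types (U V W K : set R).

Lemma sorg_openP U : sorg_open U <->
  forall x, U x -> exists b, x < b /\ forall y, x <= y -> y < b -> U y.
Proof.
split=> H x Ux; have [b [xb Hb]] := H x Ux; exists b; split => //.
  by move=> y xy yb; apply: Hb; rewrite /= in_itv /= xy yb.
by move=> y /=; rewrite in_itv /= => /andP[]; exact: Hb.
Qed.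

Lemma sorg_open_lt a : sorg_open [set y : R | y < a].
Proof. by apply/sorg_openP => x xa; exists a; split => // y _. Qed.

Lemma sorg_open_ge a : sorg_open [set y : R | a <= y].
Proof.
apply/sorg_openP => x xa; exists (x + 1); split; first by rewrite ltrDl.
by move=> y xy _ /=; apply: le_trans xy.
Qed.

Lemma sorg_openU U V : sorg_open U -> sorg_open V -> sorg_open (U `|` V).
Proof.
move=> /sorg_openP HU /sorg_openP HV; apply/sorg_openP => x [/HU|/HV] [b [xb Hb]];
  exists b; split => // y xy yb; [left|right]; exact: Hb.
Qed.

Lemma scompact_fin_cover (V : nat -> set R) :
  {homo V : n m / (n <= m)%N >-> n `<=` m} ->
  forall F : set (set R), finite_set F -> F `<=` range V ->
  exists N, \bigcup_(W in F) W `<=` V N.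
Proof.
move=> Vh F fF; move: F fF; apply: fin_ind.
  by move=> _; exists 0%N => x [].
move=> A W IH HA.
have [N HN] := IH (fun Z AZ => HA Z (or_intror AZ)).
have [k _ Wk] := HA W (or_introl erefl).
exists (maxn N k) => x [Z [->|AZ] Zx].
  by apply: (Vh k); [exact: leq_maxr | rewrite Wk].
by apply: (Vh N); [exact: leq_maxl | apply: HN; exists Z].
Qed.

Lemma scompact_incr K (V : nat -> set R) : sorg_compact K ->
  (forall n, sorg_open (V n)) ->
  {homo V : n m / (n <= m)%N >-> n `<=` m} ->
  K `<=` \bigcup_n V n -> exists N, K `<=` V N.
Proof.
move=> cK Vo Vh KV.
have Ro : forall W, range V W -> sorg_open W by move=> W [n _ <-].
have KR : K `<=` \bigcup_(W in range V) W.
  by move=> x /KV [n _ Vx]; exists (V n) => //; exists n.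
have [F [fF FV KF]] := cK (range V) Ro KR.
have [N HN] := @scompact_fin_cover V Vh F fF FV.
by exists N => x /KF Fx; apply: HN.
Qed.

Lemma inv_homo : {homo (fun n : nat => (n.+1%:R : R)^-1) : n m / (n <= m)%N >-> m <= n}.
Proof.
move=> n m nm; rewrite lef_pV2 ?posrE ?ltr0Sn // ler_nat; by [].
Qed.

Lemma scompact_gap K x : sorg_compact K ->
  exists e : R, 0 < e /\ forall y, K y -> x - e <= y -> y < x -> False.
Proof.
move=> cK.
pose V n := [set y : R | y < x - (n.+1%:R)^-1] `|` [set y | x <= y].
have [|||N HN] := @scompact_incr K V cK.
- by move=> n; apply: sorg_openU; [exact: sorg_open_lt|exact: sorg_open_ge].
- move=> n m nm y [/= yl|]; last by right.
  left; apply: (lt_le_trans yl); rewrite lerD2l lerN2; exact: inv_homo.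
- move=> y Ky; have [xy|yx] := leP x y; first by exists 0%N => //; right.
  have [k Hk] := ltr_add_invr yx; exists k => //; left => /=.
  by rewrite ltrBrDr.
exists (N.+1%:R^-1); split => // y /HN [/= yl|/= xy] ye yx.
  by move: (lt_le_trans yl ye); rewrite ltxx.
by move: (le_lt_trans xy yx); rewrite ltxx.
Qed.

Lemma scompact_closed K x : sorg_compact K -> ~ K x ->
  exists e : R, 0 < e /\ forall y, K y -> x <= y -> y < x + e -> False.
Proof.
move=> cK nKx.
pose V n := [set y : R | y < x] `|` [set y | x + (n.+1%:R)^-1 <= y].
have [|||N HN] := @scompact_incr K V cK.
- by move=> n; apply: sorg_openU; [exact: sorg_open_lt|exact: sorg_open_ge].
- move=> n m nm y [/= yl|/= yl]; first by left.
  right => /=; apply: le_trans yl; rewrite lerD2l; exact: inv_homo.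
- move=> y Ky; have [xy|yx] := leP x y; last by exists 0%N => //; left.
  have xy' : x < y by rewrite lt_neqAle xy andbT; apply/eqP => exy; apply: nKx; rewrite exy.
  have [k Hk] := ltr_add_invr xy'; exists k => //; right => /=.
  exact: ltW.
exists (N.+1%:R^-1); split => // y /HN [/= yl|/= xy] ye yx.
  by move: (lt_le_trans yl ye); rewrite ltxx.
by move: (le_lt_trans xy yx); rewrite ltxx.
Qed.

Lemma scompact_complement_open K : sorg_compact K -> sorg_open (~` K).
Proof.
move=> cK; apply/sorg_openP => x nKx.
have [e [e0 He]] := @scompact_closed K x cK nKx.
exists (x + e); split; first by rewrite ltrDl.
by move=> y xy ye Ky; exact: He Ky xy ye.
Qed.

Lemma scompactU K1 K2 : sorg_compact K1 -> sorg_compact K2 -> sorg_compact (K1 `|` K2).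
Proof.
move=> c1 c2 C Co KC.
have [D1 [f1 D1C K1D]] := c1 C Co (fun x Kx => KC x (or_introl Kx)).
have [D2 [f2 D2C K2D]] := c2 C Co (fun x Kx => KC x (or_intror Kx)).
exists (D1 `|` D2); split.
- by rewrite finite_setU.
- by move=> V [/D1C|/D2C].
- move=> x [/K1D|/K2D] [V DV Vx]; exists V => //; [left|right] => //.
Qed.

Lemma scompact1 x : sorg_compact [set x : R].
Proof.
move=> C Co KC; have [V CV Vx] := KC x erefl.
exists [set V]; split; first exact: finite_set1.
- by move=> W ->.
- by move=> y ->; exists V.
Qed.

Lemma scompact0 : sorg_compact (@set0 R).
Proof. by move=> C _ _; exists set0; split => //; exact: finite_set0. Qed.

Lemma scompact_bigcup (A : set (set R)) : finite_set A ->
  (forall L, A L -> sorg_compact L) -> sorg_compact (\bigcup_(L in A) L).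
Proof.
move: A; apply: fin_ind.
  by move=> _; rewrite bigcup_set0; exact: scompact0.
move=> A L IH H.
rewrite bigcup_setU1; apply: scompactU; first by apply: H; left.
by apply: IH => Z AZ; apply: H; right.
Qed.

End A.

Section B.
Variable R : realType.
Implicit Types (U V W K : set R).

Lemma scott_sub W : sorg_open W -> scott_open [set K | inQ K /\ K `<=` W].
Proof.
move=> oW; split.
- by move=> K [].
- by move=> K L [_ KW] QL LK; split=> //; exact: subset_trans LK KW.
move=> D s [DQ [[d0 Dd0] Ddir]] [Qs sub_s lub_s] [_ sW].
have capW : forall y, (forall d, D d -> d y) -> W y.
  move=> y Hy; apply: sW.
  have Qt : inQ (s `|` [set y]).
    split; first by case: Qs => [[z sz] _]; exists z; left.

    by apply: scompactU; [case: Qs | exact: scompact1].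
  apply: (lub_s _ Qt); last by right.
  by move=> d Dd z [sz|->]; [exact: sub_s Dd z sz | exact: Hy].
pose C := [set V | V = W \/ exists2 d, D d & V = ~` d].
have Co : forall V, C V -> sorg_open V.
  move=> V [->|[d Dd ->]] //; apply: scompact_complement_open.
  by case: (DQ d Dd).
have d0C : d0 `<=` \bigcup_(V in C) V.
  move=> y d0y; have [Wy|nWy] := pselect (W y).
    by exists W => //; left.
  case: (pselect (exists2 d, D d & ~ d y)) => [[d Dd ndy]|nex].
    by exists (~` d) => //; right; exists d.
  exfalso; apply: nWy; apply: capW => d Dd; apply: contrapT => ndy.
  by apply: nex; exists d.
have [F [fF FC d0F]] := (DQ d0 Dd0).2 C Co d0C.
have key : forall G : set (set R), finite_set G -> G `<=` C ->
    exists e, [/\ D e, e `<=` d0 & e `&` \bigcup_(V in G) V `<=` W].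
  move=> G fG; move: G fG; apply: fin_ind.
    by move=> _; exists d0; split => // z [_ [Z]].
  move=> G V IH GVC.
  have [e [De ed0 eW]] := IH (fun Z GZ => GVC Z (or_intror GZ)).
  case: (GVC V (or_introl erefl)) => [->|[d Dd ->]].
    exists e; split => // z [ez [Z [->|GZ] Zz]] //.
    by apply: eW; split => //; exists Z.
  have [M [DM eM dM]] := Ddir e d De Dd.
  exists M; split => //; first exact: subset_trans eM ed0.
  move=> z [Mz [Z [->|GZ] Zz]]; first by exfalso; apply: Zz; exact: dM.
  by apply: eW; split; [exact: eM | exists Z].
have [e [De ed0 eW]] := key F fF FC.
exists e => //; split; first exact: DQ.
by move=> z ez; apply: eW; split => //; exact: d0F (ed0 z ez).
Qed.

End B.

Section C.
Variable R : realType.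
Implicit Types (U V W K : set R).

Lemma sorg_measurable U : sorg_open U -> measurable (U : set (measurableTypeR R)).
Proof.
move=> /sorg_openP oU.
pose E := \bigcup_(p : rat) \bigcup_(q : rat)
  [set y : R | [set z : R | ratr p < z < ratr q] `<=` U /\ ratr p < y < ratr q].
have mE : measurable (E : set (measurableTypeR R)).
  apply: bigcupT_measurable_rat => p; apply: bigcupT_measurable_rat => q.
  case: (pselect ([set z : R | ratr p < z < ratr q] `<=` U)) => c.
    rewrite (_ : [set y | _ /\ _] = `]ratr p, ratr q[%classic); first exact: measurable_itv.
    by apply/seteqP; split => y /=; rewrite in_itv /=; [case|split].
  rewrite (_ : [set y | _ /\ _] = set0); first exact: measurable0.
  by apply/seteqP; split => y //= [].
have EU : E `<=` U by move=> y [p _ [q _ [c /c]]].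
have [g Hg] : {g : R -> rat & forall x, U x -> x < ratr (g x) /\
     forall y, x <= y -> y < ratr (g x) -> U y}.
  apply: (@choice R rat (fun x q => U x -> x < ratr q /\
     forall y, x <= y -> y < ratr q -> U y)) => x; case: (pselect (U x)) => Ux; last by exists 0%Q.
  have [b [xb Hb]] := oU x Ux.
  have [q] := rat_in_itvoo xb; rewrite in_itv /= => /andP[xq qb].
  exists q => _; split => // y xy yq; apply: Hb => //; exact: lt_trans qb.
have key : forall x y, (U `\` E) x -> (U `\` E) y -> g x = g y -> x < y -> False.
  move=> x y [Ux nEx] [Uy nEy] gxy xy; apply: nEy.
  have [p] := rat_in_itvoo xy; rewrite in_itv /= => /andP[xp py].
  have [yg _] := Hg y Uy.
  exists p => //; exists (g x) => //; split; last by rewrite py gxy yg.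
  move=> z /= /andP[pz zq]; apply: (Hg x Ux).2 => //.
  exact: ltW (lt_trans xp pz).
have mN : measurable ((U `\` E) : set (measurableTypeR R)).
  apply: countable_measurable; first exact: measurable_set1.
  apply/countable_injP; exists (fun x => choice.pickle (g x)) => x y.
  rewrite !inE => Nx Ny /(pcan_inj choice.pickleK) gxy.
  case: (ltgtP x y) => // xy; first by exfalso; exact: key Nx Ny gxy xy.
  by exfalso; apply: key Ny Nx (esym gxy) xy.
by rewrite -(setDUK EU); exact: measurableU.
Qed.

End C.

Section D.
Variable R : realType.
Implicit Types (U V W K : set R).

Lemma local_small (mu : {measure set (measurableTypeR R) -> \bar R}) U (x e : R) :
  sorg_open U -> (mu U < +oo)%E -> (forall x, U x -> mu [set x] = 0%E) ->
  U x -> 0 < e ->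
  exists d, [/\ 0 < d, (forall y, x <= y -> y < x + d -> U y) &
                 (mu `[x, (x + d)%R[%classic <= e%:E)%E].
Proof.
move=> oU Ufin U0 Ux e0.
have mU := @sorg_measurable R U oU.
have /sorg_openP oU' := oU.
have [b [xb Hb]] := oU' x Ux.
have [c c0 bc] : exists2 c, 0 < c & b = x + c.
  by exists (b - x); [rewrite subr_gt0 | rewrite addrC subrK].
subst b.
pose F n := `[x, x + c / n.+1%:R[%classic.
have invle1 n : (n.+1%:R : R)^-1 <= 1.
  by have := @inv_homo R 0 n (leq0n n); rewrite invr1.
have inv0 n : 0 < (n.+1%:R : R)^-1 by rewrite invr_gt0 ltr0Sn.
have Fsub n : F n `<=` U.
  move=> y; rewrite /F /= in_itv /= => /andP[xy yb]; apply: Hb => //.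
  apply: (lt_le_trans yb).
  by rewrite lerD2l ler_piMr // ltW.
have mF n : measurable (F n : set (measurableTypeR R)) by exact: measurable_itv.
have FI : \bigcap_n F n = [set x].
  apply/seteqP; split => y /=.
    move=> Hy; have := Hy 0%N I; rewrite /F /= in_itv /= => /andP[xy _].
    have [yx|xy'] := eqVneq y x => //.
    have xy2 : x < y by rewrite lt_neqAle eq_sym xy' xy.
    have q0 : 0 < (y - x) / c by rewrite divr_gt0 // subr_gt0.
    have [k Hk] := ltr_add_invr q0.
    rewrite add0r ltr_pdivlMr // in Hk.
    have := Hy k I; rewrite /F /= in_itv /= => /andP[_ yk].
    move: Hk yk; rewrite mulrC; set t := c / _ => h1 h2; lra.
  move=> -> n _; rewrite /F /= in_itv /= lexx /= ltrDl.
  by rewrite divr_gt0.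
have mFI : measurable ((\bigcap_n F n) : set (measurableTypeR R)).
  by rewrite FI; exact: measurable_set1.
have Fh : {homo F : n m / (n <= m)%N >-> (m <= n)%O}.
  move=> n m nm; rewrite subsetEset => y; rewrite /F /= !in_itv /= => /andP[-> ym] /=.
  apply: (lt_le_trans ym); rewrite lerD2l; apply: ler_wpM2l; first exact: ltW.
  exact: inv_homo.
have F0fin : (mu (F 0%N) < +oo)%E.
  apply: le_lt_trans Ufin; apply: le_measure; rewrite ?inE //; exact: Fsub.
have := nonincreasing_cvg_mu F0fin mF mFI Fh.
rewrite FI U0 // => /fine_cvgP[finF cF].
have H := @cvgr_lt _ _ _ _ _ 0 cF e e0.
have {}H := H eventually_filter.
case: (filterI finF H) => N _ HN.
have [fN ltN] := HN N (leqnn N).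
exists (c / N.+1%:R); split.
- by rewrite divr_gt0.
- by move=> y xy yc; apply: (Fsub N) ; rewrite /F /= in_itv /= xy yc.
- by move: fN ltN; rewrite /comp /F => fN ltN; rewrite -(fineK fN) lee_fin; exact: ltW.
Qed.

End D.

Section E.
Variable R : realType.
Implicit Types (U V W K : set R).

Lemma small_cover (mu : {measure set (measurableTypeR R) -> \bar R}) U K (r : R) :
  sorg_open U -> (mu U < +oo)%E -> (forall x, U x -> mu [set x] = 0%E) ->
  sorg_compact K -> K `<=` U -> 0 < r ->
  exists W, [/\ sorg_open W, K `<=` W & (mu W <= r%:E)%E].
Proof.
move=> oU Ufin U0 cK KU r0.
have hH : forall x, exists q : rat, K x -> ratr q < x /\
    forall y, K y -> ratr q < y -> x <= y.
  move=> x; case: (pselect (K x)) => Kx; last by exists 0%Q.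
  have [e [e0 He]] := @scompact_gap R K x cK.
  have xe : x - e < x by rewrite ltrBlDr ltrDl.
  have [q] := rat_in_itvoo xe; rewrite in_itv /= => /andP[eq qx].
  exists q => _; split => // y Ky qy; rewrite leNgt; apply/negP => yx.
  exact: He Ky (ltW (lt_trans eq qy)) yx.
have [h Hh] := choice hH.
have hinj : forall x y, K x -> K y -> h x = h y -> x = y.
  move=> x y Kx Ky hxy; case: (ltgtP x y) => // xy; exfalso.
  - have [hy Hy] := Hh y Ky; have [hx _] := Hh x Kx.
    have := Hy x Kx; rewrite -hxy => /(_ hx); rewrite leNgt xy //.
  - have [hy _] := Hh y Ky; have [hx Hx] := Hh x Kx.
    have := Hx y Ky; rewrite hxy => /(_ hy); rewrite leNgt xy //.
pose k x := choice.pickle (h x).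
pose eps (n : nat) := r / (2 ^ n.+1)%:R.
have eps0 n : 0 < eps n by rewrite divr_gt0 // ltr0n expn_gt0.
have dH : forall x, exists d : R, U x -> [/\ 0 < d,
    (forall y, x <= y -> y < x + d -> U y) &
    (mu `[x, (x + d)%R[%classic <= (eps (k x))%:E)%E].
  move=> x; case: (pselect (U x)) => Ux; last by exists 0.
  have [d Hd] := @local_small R mu U x (eps (k x)) oU Ufin U0 Ux (eps0 (k x)).
  by exists d => _.
have [dl Hd] := choice dH.
pose J n := [set y | exists2 x, K x /\ k x = n & x <= y < x + dl x].
pose W := \bigcup_n J n.
have Jm n : measurable (J n : set (measurableTypeR R)) /\ (mu (J n) <= (eps n)%:E)%E.
  case: (pselect (exists x, K x /\ k x = n)) => [[x0 [Kx0 kx0]]|nex].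
    have -> : J n = `[x0, (x0 + dl x0)%R[%classic.
      apply/seteqP; split => y /=; rewrite in_itv /=.
        move=> [x [Kx kx] yx]; have xx0 : x = x0.
          apply: hinj => //; apply: (pcan_inj choice.pickleK).
          by move: kx kx0; rewrite /k => -> ->.
        by rewrite -xx0.
      by move=> yx; exists x0.
    split; first exact: measurable_itv.
    by have [_ _] := Hd x0 (KU x0 Kx0); rewrite kx0.
  have -> : J n = set0.
    by apply/seteqP; split => y //= [x [Kx kx]] _; apply: nex; exists x.
  by split; [exact: measurable0 | rewrite measure0 lee_fin ltW].
exists W; split.
- apply/sorg_openP => y [n _ [x [Kx kx] /andP[xy yd]]].
  exists (x + dl x); split => // z yz zd; exists (k x) => //; exists x => //.
  by rewrite (le_trans xy yz) zd.
- move=> x Kx; exists (k x) => //; exists x => //.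
  have [d0 _ _] := Hd x (KU x Kx).
  by rewrite lexx ltrDl.
- have mW : measurable (W : set (measurableTypeR R)).
    by apply: bigcupT_measurable => n; exact: (Jm n).1.
  apply: le_trans (@measure_sigma_subadditive _ _ _ mu W J (fun n => (Jm n).1) mW (@subset_refl _ W)) _.
  apply: le_trans (epsilon_trick0 xpredT (ltW r0)).
  apply: lee_nneseries => n; [move=> _ _; exact: measure_ge0 | move=> _; exact: (Jm n).2].
Qed.

End E.

Lemma singl_eq (R : realType) (W : set R) :
  [set x | inQ [set x] /\ [set x] `<=` W] = W.
Proof.
apply/seteqP; split => x /=; first by move=> [_ /(_ x erefl)].
move=> Wx; split; last by move=> y ->.
by split; [exists x | exact: scompact1].
Qed.

Lemma part1 (R : realType) (mu : {measure set (measurableTypeR R) -> \bar R}) :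
  (exists U : set R, [/\ sorg_open U, (0 < mu U)%E, (mu U < +oo)%E &
                          forall x, U x -> mu [set x] = 0%E]) ->
  ~ point_continuous (mubar mu).
Proof.
move=> [U [oU Upos Ufin U0]] pc.
have sUU := @scott_sub R U oU.
have hU : mu U = (fine (mu U))%:E.
  by rewrite fineK // ge0_fin_numE // measure_ge0.
set m := fine (mu U) in hU.
have m0 : 0 < m by move: Upos; rewrite hU lte_fin.
have r0 : 0 < m / 2 by rewrite divr_gt0.
have [A [fA AUU HA]] := pc _ sUU (m / 2) (ltW r0)
  ltac:(rewrite /mubar singl_eq hU lte_fin; lra).
pose K := \bigcup_(L in A) L.
have cK : sorg_compact K.
  by apply: scompact_bigcup fA _ => L AL; case: (AUU L AL) => -[].
have KU : K `<=` U by move=> x [L AL Lx]; exact: (AUU L AL).2 x Lx.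
have [W [oW KW muW]] := @small_cover R mu U K (m / 2) oU Ufin U0 cK KU r0.
have AW : A `<=` [set L | inQ L /\ L `<=` W].
  move=> L AL; split; first exact: (AUU L AL).1.
  by move=> x Lx; apply: KW; exists L.
have := HA _ (@scott_sub R W oW) AW.
by rewrite /mubar singl_eq => /lt_le_trans/(_ muW); rewrite ltxx.
Qed.

Theorem theorem4p21 (R : realType) :
  (forall mu : {measure set (measurableTypeR R) -> \bar R},
     (exists U : set R, [/\ sorg_open U, (0 < mu U)%E, (mu U < +oo)%E &
                          forall x, U x -> mu [set x] = 0%E]) ->
     ~ point_continuous (mubar mu)) /\
  ~ point_continuous (mubar (@lebesgue_measure R)).
Proof.
split; first exact: part1.
have L : lebesgue_measure (`[0%R, 1%R[%classic : set R) = 1%E.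
  by rewrite lebesgue_measure_itv /= lte_fin ltr01 sube0.
apply: part1; exists `[0, 1[%classic; split.
- apply/sorg_openP => x /=; rewrite in_itv /= => /andP[x0 x1].
  exists 1; split => // y xy y1 /=; rewrite in_itv /= y1 andbT.
  exact: le_trans xy.
- exact: (eq_ind 1%E (fun v => (0 < v)%E) lte01 _ (esym L)).
- exact: (eq_ind 1%E (fun v => (v < +oo)%E) (ltry 1) _ (esym L)).
- move=> x _; have L1 : lebesgue_measure ([set x] : set R) = 0%E.
    by rewrite -set_itv1 lebesgue_measure_itv /= lte_fin ltxx.
  exact: L1.
Qed.
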